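(* For every integer $n\ge 4$, the oriented path $Q_{n+1}$ is not homomorphic to $AC_n$.
   Context: For digraphs $G,H$, a homomorphism $G\to H$ is a map $\varphi:V_G\to V_H$ such that $(u,v)\in A_G$ implies $(\varphi(u),\varphi(v))\in A_H$. An oriented path $(p_0,\dots,p_k)$ consists of distinct vertices where for each $i$ exactly one of the arcs $p_ip_{i+1}$ (forward) or $p_{i+1}p_i$ (backward) is present, and no other arcs. For $n\ge 3$, $Q_n$ is the oriented path $(q_0,\dots,q_{n-1})$ on $n$ vertices such that: the first two arcs $q_0q_1$ and $q_1q_2$ are forward arcs; the subpath $(q_1,\dots,q_{n-2})$ is alternating (every two consecutive arcs have opposite directions); and the last two arcs (between $q_{n-3},q_{n-2}$ and between $q_{n-2},q_{n-1}$) have the same direction. For $n\ge 3$, $AC_n$ is the oriented cycle with vertices $a_0,\dots,a_{n-1}$ obtained from the alternating path $A_{n+1}=(a_0,\dots,a_n)$ — in which the arc between $a_i$ and $a_{i+1}$ is $a_i\to a_{i+1}$ if $i$ is even and $a_{i+1}\to a_i$ if $i$ is odd — by identifying $a_n$ with $a_0$. *)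

(* Defs.v *)
From mathcomp Require Import all_boot.
Set Implicit Arguments. Unset Strict Implicit. Unset Printing Implicit Defensive.

Definition is_hom (V W : finType) (A : rel V) (B : rel W) (phi : V -> W) : Prop :=
  forall u v, A u v -> B (phi u) (phi v).

Definition homomorphic (V W : finType) (A : rel V) (B : rel W) : Prop :=
  exists phi : V -> W, is_hom A B phi.

(* Q_m on vertices q_0..q_{m-1} = 'I_m.  The arc between q_i and q_{i+1}
   (0 <= i <= m-2) is forward (q_i -> q_{i+1}) iff Q_fwd m i:
   arcs 0,1 forward; arcs 1..m-3 alternate (so arc i forward iff i odd);
   arc m-2 has the same direction as arc m-3. *)
Definition Q_fwd (m i : nat) : bool := (i <= 1) || odd (minn i (m - 3)).

Definition Q_arc (m : nat) : rel 'I_m :=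
  fun u v => ((v == u.+1 :> nat) && Q_fwd m u) || ((u == v.+1 :> nat) && ~~ Q_fwd m v).

Definition AC_arc (n : nat) : rel 'I_n :=
  fun u v => ((v == u.+1 %% n :> nat) && ~~ odd u) || ((u == v.+1 %% n :> nat) && odd v).

(* Main.v *)
Require Import Defs.
From mathcomp Require Import all_boot.
From mathcomp Require Import zify.

Lemma ACchar n (u v : 'I_n) : AC_arc u v ->
  [\/ [/\ nat_of_ord v = (nat_of_ord u).+1, ~~ odd u & (nat_of_ord u).+1 < n],
      [/\ (nat_of_ord u).+1 = n, nat_of_ord v = 0 & ~~ odd u],
      [/\ nat_of_ord u = (nat_of_ord v).+1, odd v & (nat_of_ord v).+1 < n]
    | [/\ (nat_of_ord v).+1 = n, nat_of_ord u = 0 & odd v]].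
Proof.
have hu := ltn_ord u; have hv := ltn_ord v.
rewrite /AC_arc; case/orP => /andP [/eqP e o].
  have [h|h] := ltnP (nat_of_ord u).+1 n.
    by rewrite modn_small in e => //; apply: Or41.
  have h' : (nat_of_ord u).+1 = n by lia.
  by rewrite h' modnn in e; apply: Or42.
have [h|h] := ltnP (nat_of_ord v).+1 n.
  by rewrite modn_small in e => //; apply: Or43.
have h' : (nat_of_ord v).+1 = n by lia.
by rewrite h' modnn in e; apply: Or44.
Qed.

Lemma Qstep n (phi : 'I_n.+1 -> 'I_n) (H : is_hom (@Q_arc n.+1) (@AC_arc n) phi)
  k (hk : k < n) :
  if Q_fwd n.+1 k then AC_arc (phi (inord k)) (phi (inord k.+1))
  else AC_arc (phi (inord k.+1)) (phi (inord k)).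
Proof.
case E: (Q_fwd n.+1 k); apply: H; rewrite /Q_arc !inordK ?E ?eqxx //=;
  try lia; by rewrite orbT.
Qed.

Theorem mainTheorem5 (n : nat) (hn : 4 <= n) :
  ~ homomorphic (@Q_arc n.+1) (@AC_arc n).
Proof.
case=> phi H.
pose f k := nat_of_ord (phi (inord k)).
have S k (hk : k < n) := @Qstep n phi H k hk.
have A0 := S 0 ltac:(lia). have A1 := S 1 ltac:(lia).
rewrite /Q_fwd /= in A0 A1.
move/ACchar: A0 => A0; move/ACchar: A1 => A1.
have [no f1 f2] : [/\ odd n, f 1 = 0 & f 2 = 1].
  by rewrite /f; case: A0 => -[]; case: A1 => -[]; intros; split; lia.
have inv : forall j, 2 <= j <= n - 2 -> f j <= j - 1 /\ odd (f j + j).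
  elim=> [|j IH] hj; first lia.
  have [hj2|hj2] := ltnP j 2.
    have -> : j.+1 = 2 by lia.
    by rewrite f2.
  have [IH1 IH2] := IH ltac:(lia).
  have := S j ltac:(lia).
  have -> : Q_fwd n.+1 j = odd j.
    rewrite /Q_fwd; have -> : minn j (n.+1 - 3) = j by lia.
    by have -> : (j <= 1) = false by lia.
  rewrite /f in IH1 IH2 *.
  clear IH S f1 f2 A0 A1 H; have [E|E] := boolP (odd j); rewrite ?E ?(negbTE E) => /ACchar [] []; intros; split; lia.
have [I1 I2] := inv (n - 2) ltac:(lia).
move: (S (n - 2) ltac:(lia)) (S (n - 1) ltac:(lia)).
have -> : Q_fwd n.+1 (n - 2) = true.
  rewrite /Q_fwd; apply/orP; right.
  have -> : minn (n - 2) (n.+1 - 3) = n - 2 by lia.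
  clear -no hn; lia.
have -> : Q_fwd n.+1 (n - 1) = true.
  rewrite /Q_fwd; apply/orP; right.
  have -> : minn (n - 1) (n.+1 - 3) = n - 2 by lia.
  clear -no hn; lia.
have -> : (n - 2).+1 = n - 1 by lia.
have -> : (n - 1).+1 = n by lia.
move=> /ACchar B0' /ACchar B1'.
rewrite /f in I1 I2. clear S H inv f1 f2 A0 A1.
by case: B0' => -[]; case: B1' => -[]; lia.
Qed.
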